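(* Let $(R,\mathfrak m,k)$ be a commutative noetherian local ring and $I$ an ideal with $\nu(I)=2$ and $\operatorname{grade}_R(I)=0$. Let $f_1,f_2$ be a minimal generating set of $I$, $S=R/I$, $E$ the Koszul complex on $f_1,f_2$ with $E_1$ having basis $v_1,v_2$, $\partial(v_i)=f_i$. Then the following are equivalent: (1) $I$ is a q.c.i. ideal; (2) $\mathrm H_1(E)\cong S^2$, $(0:_RI)=\Delta R$ and $(0:_R\Delta)=I$, where $\Delta=a_{11}a_{22}-a_{12}a_{21}$ for cycles $z_j=a_{1j}v_1+a_{2j}v_2$ ($j=1,2$, $a_{ij}\in R$) whose homology classes minimally generate $\mathrm H_1(E)$; (3) there exist elements $a,b,c,d\in\mathfrak m$ such that the sequence $$R^4\xrightarrow{d_3}R^3\xrightarrow{d_2}R^2\xrightarrow{d_1}R\xrightarrow{d_0}R\xrightarrow{d_1^{\mathrm T}}R^2$$ is exact, where $d_0$ is multiplication by $ad-bc$, $d_1=\begin{bmatrix} f_1& f_2\end{bmatrix}$, $$d_2=\begin{bmatrix}-f_2&a&b\\ f_1&c&d\end{bmatrix},\qquad d_3=\begin{bmatrix}-c&-d&a&b\\ f_1&0&f_2&0\\ 0&f_1&0&f_2\end{bmatrix}.$$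
   Context: $\nu(M)$ denotes minimal number of generators. An ideal $I$ of a local ring $R$ with $\nu(I)=n$, minimal generating set $f_1,\dots,f_n$, Koszul complex $E$ on $f_1,\dots,f_n$ and $S=R/I$ is a quasi-complete intersection (q.c.i.) ideal if $\mathrm H_1(E)$ is a free $S$-module and the canonical homomorphism of graded $S$-algebras $\bigwedge^S_* \mathrm H_1(E)\to \mathrm H_*(E)$ is bijective. $\operatorname{grade}_R(I)$ is the maximal length of an $R$-regular sequence in $I$. *)

(* Defs.v *)
From HB Require Import structures.
From mathcomp Require Import all_boot all_order all_algebra.
Set Implicit Arguments. Unset Strict Implicit. Unset Printing Implicit Defensive.
Import Order.TTheory GRing.Theory Num.Theory.
Local Open Scope ring_scope.

Section Defs.
Variable R : comNzRingType.

Definition is_ideal (P : R -> Prop) : Prop :=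
  [/\ P 0, (forall x y, P x -> P y -> P (x + y)) & (forall r x, P x -> P (r * x))].

Definition gen_ideal (s : seq R) (x : R) : Prop :=
  exists c : seq R, x = \sum_(i < size s) c`_i * s`_i.

Definition generates (P : R -> Prop) (s : seq R) : Prop :=
  forall x, P x <-> gen_ideal s x.

Definition noetherian : Prop :=
  forall P, is_ideal P -> exists s, generates P s.

Definition proper_ideal (P : R -> Prop) : Prop := is_ideal P /\ ~ P 1.

Definition maximal_ideal (P : R -> Prop) : Prop :=
  proper_ideal P /\
  forall Q, proper_ideal Q -> (forall x, P x -> Q x) -> forall x, Q x <-> P x.

Definition nu (P : R -> Prop) (n : nat) : Prop :=
  (exists s, size s = n /\ generates P s) /\
  (forall s, generates P s -> (n <= size s)%N).

Definition regular_seq (s : seq R) : Prop :=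
  (forall i, (i < size s)%N ->
     forall y, gen_ideal (take i s) (s`_i * y) -> gen_ideal (take i s) y)
  /\ ~ gen_ideal s 1.

Definition grade (P : R -> Prop) (g : nat) : Prop :=
  (exists s, [/\ regular_seq s, size s = g & forall i, (i < size s)%N -> P s`_i]) /\
  (forall s, regular_seq s -> (forall i, (i < size s)%N -> P s`_i) -> (size s <= g)%N).

(** Koszul complex E on f1, f2:  E_2 = R (v1/\v2) -> E_1 = R v1 + R v2 -> E_0 = R,
    with d(v_i) = f_i and d(v1/\v2) = f1 v2 - f2 v1.  Elements of E_1 are pairs. *)
Variables f1 f2 : R.

Definition inI (x : R) : Prop := gen_ideal [:: f1; f2] x.

Definition kcycle (z : R * R) : Prop := z.1 * f1 + z.2 * f2 = 0.

Definition kbound (z : R * R) : Prop := exists t, z = (- (t * f2), t * f1).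

(** H_2(E) = Z_2(E) = (0 :_R I) *)
Definition kcycle2 (x : R) : Prop := x * f1 = 0 /\ x * f2 = 0.

Definition lincomb r (w : 'I_r -> R * R) (c : 'I_r -> R) : R * R :=
  (\sum_(i < r) c i * (w i).1, \sum_(i < r) c i * (w i).2).

Definition H1_generated r (w : 'I_r -> R * R) : Prop :=
  (forall i, kcycle (w i)) /\
  forall z, kcycle z -> exists c, kbound (z.1 - (lincomb w c).1, z.2 - (lincomb w c).2).

(** the classes of w_1..w_r form a basis of H_1(E) as S-module *)
Definition H1_basis r (w : 'I_r -> R * R) : Prop :=
  H1_generated w /\
  forall c, kbound (lincomb w c) -> forall i, inI (c i).

(** product in the Koszul algebra: E_1 x E_1 -> E_2 *)
Definition kprod (z z' : R * R) : R := z.1 * z'.2 - z.2 * z'.1.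

(** q.c.i.: H_1(E) free over S with basis [w_i] and the canonical map
    /\^S_* H_1(E) -> H_*(E) bijective.  Degree 0 and 1 are the identity maps
    S -> H_0 = R/I and H_1 -> H_1; degree 2: basis w_i /\ w_j (i<j) goes to
    the class of w_i w_j in H_2 = Z_2; degree k >= 3: /\^k S^r (free of rank
    'C(r,k)) maps to H_k = 0, so bijectivity means it is zero. *)
Definition wedge2_bijective r (w : 'I_r -> R * R) : Prop :=
  (forall x, kcycle2 x -> exists c : 'I_r -> 'I_r -> R,
       x = \sum_(i < r) \sum_(j < r | (i < j)%N) c i j * kprod (w i) (w j)) /\
  (forall c : 'I_r -> 'I_r -> R,
       \sum_(i < r) \sum_(j < r | (i < j)%N) c i j * kprod (w i) (w j) = 0 ->
       forall i j : 'I_r, (i < j)%N -> inI (c i j)).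

Definition qci : Prop :=
  exists r (w : 'I_r -> R * R),
    [/\ H1_basis w, wedge2_bijective w &
        forall k, (3 <= k)%N -> 'C(r, k) = 0%N \/ inI 1].

Definition cond2 : Prop :=
  (exists w : 'I_2 -> R * R, H1_basis w) /\
  exists z : 'I_2 -> R * R,
    [/\ H1_generated z,
        (forall i : 'I_2, ~ H1_generated (fun _ : 'I_1 => z i)) &
        let Delta := kprod (z 0) (z 1) in
        (forall x, kcycle2 x <-> exists t, x = Delta * t) /\
        (forall x, x * Delta = 0 <-> inI x)].

Definition exact_at n p q (A : 'M[R]_(n, p)) (B : 'M[R]_(q, n)) : Prop :=
  B *m A = 0 /\ forall x : 'cV[R]_n, B *m x = 0 -> exists y : 'cV[R]_p, x = A *m y.

Definition mx_of_seq m n (L : seq (seq R)) : 'M[R]_(m, n) :=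
  \matrix_(i < m, j < n) nth 0 (nth [::] L i) j.

Definition cond3 (mm : R -> Prop) : Prop :=
  exists a b c d : R, [/\ mm a, mm b, mm c, mm d &
    let d0 := mx_of_seq 1 1 [:: [:: a * d - b * c]] in
    let d1 := mx_of_seq 1 2 [:: [:: f1; f2]] in
    let d1T := mx_of_seq 2 1 [:: [:: f1]; [:: f2]] in
    let d2 := mx_of_seq 2 3 [:: [:: - f2; a; b]; [:: f1; c; d]] in
    let d3 := mx_of_seq 3 4 [:: [:: - c; - d; a; b]; [:: f1; 0; f2; 0];
                                [:: 0; f1; 0; f2]] in
    [/\ exact_at d3 d2, exact_at d2 d1, exact_at d1 d0 & exact_at d0 d1T]].

End Defs.

(* Main.v *)
From HB Require Import structures.
From mathcomp Require Import all_boot all_order all_algebra.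
From mathcomp Require Import ring zify.
From Stdlib Require Import Classical IndefiniteDescription.
Require Import Defs.
Set Implicit Arguments. Unset Strict Implicit. Unset Printing Implicit Defensive.
Import GRing.Theory.

Section Gen.
Variable R : comNzRingType.
Local Open Scope ring_scope.

Lemma gen_nil (x : R) : gen_ideal [::] x <-> x = 0.
Proof.
split; first by case=> c ->; rewrite big_ord0.
by move=> ->; exists [::]; rewrite big_ord0.
Qed.

Lemma gen1 (g x : R) : gen_ideal [:: g] x <-> exists c, x = c * g.
Proof.
split; first by case=> c ->; exists c`_0; rewrite big_ord1.
by case=> c ->; exists [:: c]; rewrite big_ord1.
Qed.

Lemma gen2 (f1 f2 x : R) : gen_ideal [:: f1; f2] x <-> exists p q, x = p * f1 + q * f2.
Proof.
split; first by case=> c ->; exists c`_0, c`_1; rewrite !big_ord_recl big_ord0 addr0.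
by case=> p [q ->]; exists [:: p; q]; rewrite !big_ord_recl big_ord0 addr0.
Qed.

Lemma ideal_sum (P : R -> Prop) n (F : 'I_n -> R) :
  is_ideal P -> (forall i, P (F i)) -> P (\sum_(i < n) F i).
Proof. by case=> P0 PD PM HF; apply: big_ind => // i _; apply: HF. Qed.

Lemma gen_sub (P : R -> Prop) (s : seq R) x :
  is_ideal P -> (forall i, (i < size s)%N -> P s`_i) -> gen_ideal s x -> P x.
Proof.
move=> HP Hs [c ->]; apply: ideal_sum => // i.
by case: HP => _ _ PM; apply: PM; apply: Hs.
Qed.

Lemma gen_self (s : seq R) i : (i < size s)%N -> gen_ideal s s`_i.
Proof.
move=> Hi; exists [seq (j == i)%:R | j <- iota 0 (size s)].
rewrite (bigD1 (Ordinal Hi)) //= big1 ?addr0.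
  by rewrite (nth_map 0%N) ?size_iota // nth_iota // add0n eqxx mul1r.
move=> j Hj; rewrite (nth_map 0%N) ?size_iota // nth_iota // add0n.
have -> : (nat_of_ord j == i) = false.
  apply/negbTE; apply: contra Hj => /eqP Hji; apply/eqP; exact: val_inj.
by rewrite mul0r.
Qed.

Hypothesis noeth : noetherian R.

Lemma acc (J : nat -> R -> Prop) :
  (forall n, is_ideal (J n)) -> (forall n x, J n x -> J n.+1 x) ->
  exists N, forall x, (exists n, J n x) -> J N x.
Proof.
move=> Hid Hmon.
have mono n m : (n <= m)%N -> forall x, J n x -> J m x.
  elim: m => [|m IH]; first by rewrite leqn0 => /eqP ->.
  rewrite leq_eqVlt => /orP [/eqP -> //|]; rewrite ltnS => Hnm x Hx.
  by apply: Hmon; apply: IH.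
pose U x := exists n, J n x.
have HU : is_ideal U.
  split; first by exists 0%N; case: (Hid 0%N).
  - move=> x y [n Hx] [m Hy]; exists (maxn n m); case: (Hid (maxn n m)) => _ PD _.
    by apply: PD; [apply: (mono n) => //; exact: leq_maxl | apply: (mono m) => //; exact: leq_maxr].
  - by move=> r x [n Hx]; exists n; case: (Hid n) => _ _ PM; apply: PM.
have [s Hs] := noeth HU.
have Hsi i : (i < size s)%N -> U s`_i by move=> Hi; apply/Hs; apply: gen_self.
have [N HN] : exists N, forall i, (i < size s)%N -> J N s`_i.
  elim: (size s) Hsi => [|k IH] Hk; first by exists 0%N.
  have [N1 HN1] : exists N, forall i, (i < k)%N -> J N s`_i.
    by apply: IH => i Hi; apply: Hk; apply: ltnW.
  have [n Hn] := Hk k (ltnSn k).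
  exists (maxn N1 n) => i; rewrite ltnS leq_eqVlt => /orP [/eqP ->|Hi].
    by apply: (mono n) => //; exact: leq_maxr.
  by apply: (mono N1); [exact: leq_maxl| apply: HN1].
exists N => x /Hs Hx; exact: gen_sub (Hid N) HN Hx.
Qed.

Lemma no_inf_asc (good : (R -> Prop) -> Prop) :
  (forall Q, good Q -> is_ideal Q) ->
  (forall Q, good Q -> exists Q', good Q' /\ (forall x, Q x -> Q' x) /\ exists x, Q' x /\ ~ Q x) ->
  forall J0, ~ good J0.
Proof.
move=> Hid Hnext J0 gJ0.
have H Q : exists Q', good Q -> good Q' /\ (forall x, Q x -> Q' x) /\ exists x, Q' x /\ ~ Q x.
  case: (classic (good Q)) => gQ; first by case: (Hnext Q gQ) => Q' HQ'; exists Q'.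
  by exists Q.
pose next Q := proj1_sig (constructive_indefinite_description _ (H Q)).
have Hn Q : good Q -> good (next Q) /\ (forall x, Q x -> next Q x) /\ exists x, next Q x /\ ~ Q x.
  exact: (proj2_sig (constructive_indefinite_description _ (H Q))).
pose J n := iter n next J0.
have gJ n : good (J n) by elim: n => //= n IH; case: (Hn _ IH).
have [N HN] := acc (fun n => Hid _ (gJ n)) (fun n x => proj1 (proj2 (Hn _ (gJ n))) x).
have [_ [_ [x [Hx nx]]]] := Hn _ (gJ N).
by apply: nx; apply: HN; exists N.+1.
Qed.


Definition maxann (y : R) := y != 0 /\ forall z, z != 0 ->
  (forall r, r * y = 0 -> r * z = 0) -> forall r, r * z = 0 -> r * y = 0.

Lemma ann_ideal (y : R) : is_ideal (fun r => r * y = 0).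
Proof.
split; first by rewrite mul0r.
- by move=> a b Ha Hb; rewrite mulrDl Ha Hb addr0.
- by move=> r a Ha; rewrite -mulrA Ha mulr0.
Qed.

Lemma M1 x : x != 0 -> exists y, maxann y /\ forall r, r * x = 0 -> r * y = 0.
Proof.
move=> Hx; apply: NNPP => H.
pose good (Q : R -> Prop) := exists y, y != 0 /\ (forall r, r * x = 0 -> r * y = 0)
   /\ (forall r, Q r <-> r * y = 0).
apply: (@no_inf_asc good _ _ (fun r => r * x = 0)); last first.
  by exists x; split => //; split => // r; split.
- move=> Q [y [Hy [Hxy HQ]]].
  apply: NNPP => Hno; apply: H; exists y; split => //; split => // z Hz Hyz r Hrz.
  apply: NNPP => Hry; apply: Hno; exists (fun r => r * z = 0); split.
    by exists z; split => //; split => // t Ht; apply: Hyz; apply: Hxy.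
  split; first by move=> t /HQ; apply: Hyz.
  by exists r; split => // /HQ.
- move=> Q [y [_ [_ HQ]]]; have [P0 PD PM] := ann_ideal y.
  split; first by apply/HQ.
  + by move=> a b /HQ Ha /HQ Hb; apply/HQ; apply: PD.
  + by move=> r a /HQ Ha; apply/HQ; apply: PM.
Qed.

Lemma M2 y r s : maxann y -> (r * s) * y = 0 -> r * y = 0 \/ s * y = 0.
Proof.
move=> [Hy Hmax] H; case: (eqVneq (s * y) 0) => [->|Hsy]; [by right|left].
apply: (Hmax (s * y) Hsy); last by rewrite mulrA.
by move=> t Ht; rewrite mulrCA Ht mulr0.
Qed.

Lemma M2n y r s : maxann y -> r * y != 0 -> s * y != 0 -> (r * s) * y != 0.
Proof.
move=> My Hr Hs; apply/eqP => H; case: (M2 My H) => H'.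
  by move/eqP: Hr. by move/eqP: Hs.
Qed.

Lemma sep y (L : seq R) : maxann y ->
  (exists2 y', y' \in L & forall r, r * y' = 0 -> r * y = 0) \/
  (exists q, q * y != 0 /\ forall y', y' \in L -> q * y' = 0).
Proof.
move=> My; elim: L => [|y0 L IH].
  by right; exists 1; rewrite mul1r; split => //; case: My.
case: IH => [[y' Hy' H]|[q [Hq HL]]].
  by left; exists y' => //; rewrite inE Hy' orbT.
case: (classic (forall r, r * y0 = 0 -> r * y = 0)) => H0.
  by left; exists y0 => //; rewrite inE eqxx.
have [s [Hs0 Hs]] : exists s, s * y0 = 0 /\ s * y != 0.
  apply: NNPP => Hno; apply: H0 => r Hr; apply: NNPP => Hry; apply: Hno.
  by exists r; split => //; apply/eqP.
right; exists (q * s); split; first exact: M2n.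
move=> y'; rewrite inE => /orP [/eqP ->|Hy']; first by rewrite -mulrA Hs0 mulr0.
by rewrite mulrAC HL // mul0r.
Qed.

Lemma avoid (P : R -> Prop) (L : seq R) : is_ideal P ->
  (forall y, y \in L -> maxann y /\ exists2 g, P g & g * y != 0) ->
  exists2 g, P g & forall y, y \in L -> g * y != 0.
Proof.
move=> HP; elim: L => [|y L IH] HL.
  by exists 0 => //; case: HP.
have [g Pg Hg] : exists2 g, P g & forall y, y \in L -> g * y != 0.
  by apply: IH => y' Hy'; apply: HL; rewrite inE Hy' orbT.
have [My [h Ph Hh]] := HL y (mem_head _ _).
case: (eqVneq (g * y) 0) => Hgy; last first.
  by exists g => // y'; rewrite inE => /orP [/eqP ->|]; [|apply: Hg].
case: (sep L My) => [[y' Hy' H]|[q [Hq HqL]]].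
  have Hy'L : y' \in y :: L by rewrite inE Hy' orbT.
  have [My' _] := HL y' Hy'L.
  have := proj2 My' y (proj1 My) H g Hgy; by move/eqP: (Hg y' Hy').
exists (g + h * q); first by case: HP => _ PD PM; apply: PD => //; rewrite mulrC; apply: PM.
move=> y'; rewrite inE => /orP [/eqP ->|Hy'].
  by rewrite mulrDl Hgy add0r; apply: M2n.
by rewrite mulrDl -mulrA HqL // mulr0 addr0; apply: Hg.
Qed.

Lemma ann_nonzero (P : R -> Prop) : is_ideal P ->
  (forall g, P g -> exists2 x, x != 0 & g * x = 0) ->
  exists2 x, x != 0 & forall g, P g -> g * x = 0.
Proof.
move=> HP Z; apply: NNPP => Hno.
have Hy y : y != 0 -> exists2 g, P g & g * y != 0.
  move=> Hy; apply: NNPP => H; apply: Hno; exists y => // g Pg.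
  apply: NNPP => Hg; apply: H; exists g => //; exact/eqP.
have Hstep (L : seq R) : exists y', (forall y, y \in L -> maxann y) ->
    maxann y' /\ exists g, g * y' = 0 /\ forall y, y \in L -> g * y != 0.
  case: (classic (forall y, y \in L -> maxann y)) => HL; last by exists 0.
  have [g Pg Hg] : exists2 g, P g & forall y, y \in L -> g * y != 0.
    apply: (@avoid P L HP) => y Hy1; split; first exact: HL.
    by apply: Hy; case: (HL y Hy1).
  have [x Hx Hgx] := Z g Pg.
  have [y' [My' Hxy']] := M1 Hx.
  by exists y' => _; split => //; exists g; split => //; apply: Hxy'.
pose step L := proj1_sig (constructive_indefinite_description _ (Hstep L)).
have Hs (L : seq R) : (forall y, y \in L -> maxann y) ->
    maxann (step L) /\ exists g, g * step L = 0 /\ forall y, y \in L -> g * y != 0.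
  exact: (proj2_sig (constructive_indefinite_description _ (Hstep L))).
pose ys n := iter n (fun L => rcons L (step L)) [::].
pose yy n := step (ys n).
have Eys n : ys n = [seq yy i | i <- iota 0 n].
  elim: n => // n IH.
  by rewrite -addn1 iotaD map_cat /= add0n -IH addn1 cats1.

have Inv n : forall y, y \in ys n -> maxann y.
  elim: n => // n IH y; rewrite [ys _]/= mem_rcons inE => /orP [/eqP ->|]; last exact: IH.
  by case: (Hs _ IH).
pose J n x := exists c : nat -> R, x = \sum_(i < n) c i * yy i.
have HJ n : is_ideal (J n).
  split; first by exists (fun _ => 0); rewrite big1 // => i _; rewrite mul0r.
  - move=> x y [c ->] [d ->]; exists (fun i => c i + d i).
    by rewrite -big_split /=; apply: eq_bigr => i _; rewrite mulrDl.
  - move=> r x [c ->]; exists (fun i => r * c i).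
    by rewrite mulr_sumr; apply: eq_bigr => i _; rewrite mulrA.
have Jmon n x : J n x -> J n.+1 x.
  case=> c ->; exists (fun i => if (i < n)%N then c i else 0).
  rewrite big_ord_recr /= ltnn mul0r addr0; apply: eq_bigr => i _.
  by rewrite ltn_ord.
have [N HN] := acc HJ Jmon.
have [c Hc] : J N (yy N).
  apply: HN; exists N.+1; exists (fun i => (i == N)%:R).
  rewrite big_ord_recr /= eqxx mul1r big1 ?add0r // => i _.
  by rewrite (_ : (nat_of_ord i == N) = false) ?mul0r // ltn_eqF.
have [MN [g [Hg0 Hg]]] := Hs _ (Inv N).
case: (sep (ys N) MN) => [[y' Hy' H]|[q [Hq HqL]]].
  have [Hy'0 Hmax'] := Inv N y' Hy'.
  by move/eqP: (Hg y' Hy'); apply; apply: (Hmax' (yy N) (proj1 MN) H).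
move/eqP: Hq; apply; change (q * yy N = 0); rewrite Hc mulr_sumr big1 // => i _.
by rewrite mulrCA HqL ?mulr0 // Eys map_f // mem_iota /= ltn_ord.
Qed.

Lemma exists_max (J0 : R -> Prop) : proper_ideal J0 ->
  exists P, maximal_ideal P /\ forall x, J0 x -> P x.
Proof.
move=> HJ0; apply: NNPP => H.
pose good (Q : R -> Prop) := proper_ideal Q /\ forall x, J0 x -> Q x.
apply: (@no_inf_asc good _ _ J0); last by split => //.
- by move=> Q [[]].
- move=> Q [pQ sQ]; apply: NNPP => Hno; apply: H; exists Q; split => //.
  split => // Q' pQ' sub x; split => [Q'x|]; last exact: sub.
  apply: NNPP => nQx; apply: Hno; exists Q'; split.
    by split => // y Hy; apply: sub; apply: sQ.
  by split => //; exists x.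
Qed.

End Gen.
Section F.
Variable R : comNzRingType.
Variables (mm : R -> Prop) (f1 f2 : R).
Local Open Scope ring_scope.

Lemma inIP x : inI f1 f2 x <-> exists p q, x = p * f1 + q * f2.
Proof. exact: gen2. Qed.

Lemma inI_ideal : is_ideal (inI f1 f2).
Proof.
split; first by apply/inIP; exists 0, 0; rewrite !mul0r addr0.
- move=> x y /inIP [p [q ->]] /inIP [p' [q' ->]]; apply/inIP; exists (p + p'), (q + q').
  by ring.
- move=> r x /inIP [p [q ->]]; apply/inIP; exists (r * p), (r * q); ring.
Qed.

Lemma inI_f1 : inI f1 f2 f1.
Proof. by apply/inIP; exists 1, 0; ring. Qed.
Lemma inI_f2 : inI f1 f2 f2.
Proof. by apply/inIP; exists 0, 1; ring. Qed.

Lemma I2cases (i : 'I_2) : i = 0 \/ i = 1.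
Proof. by case: i => [[|[|i]] Hi] //; [left|right]; apply: val_inj. Qed.

Lemma ord0_2 : (ord0 : 'I_2) = 0. Proof. exact: val_inj. Qed.
Lemma lift0_2 : (lift ord0 ord0 : 'I_2) = 1. Proof. exact: val_inj. Qed.

Lemma lincomb2 (w : 'I_2 -> R * R) c : lincomb w c =
  (c 0 * (w 0).1 + c 1 * (w 1).1, c 0 * (w 0).2 + c 1 * (w 1).2).
Proof. by rewrite /lincomb !big_ord_recl !big_ord0 !addr0 ord0_2 lift0_2. Qed.

Lemma wsum2 (w : 'I_2 -> R * R) (c : 'I_2 -> 'I_2 -> R) :
  \sum_(i < 2) \sum_(j < 2 | (i < j)%N) c i j * kprod (w i) (w j) = c 0 1 * kprod (w 0) (w 1).
Proof.
rewrite big_ord_recl big_ord1 /= !big_mkcond !big_ord_recl !big_ord0 /=.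
rewrite big_mkcond !big_ord_recl big_ord0 /=.
by rewrite !add0r !addr0 ord0_2 lift0_2.
Qed.

Lemma kprod_cyc z z' : kcycle f1 f2 z -> kcycle f1 f2 z' -> kcycle2 f1 f2 (kprod z z').
Proof.
case: z => a b; case: z' => c d; rewrite /kcycle /kcycle2 /kprod /= => H H'.
split.
  have -> : (a * d - b * c) * f1 = d * (a * f1 + b * f2) - b * (c * f1 + d * f2) by ring.
  by rewrite H H' !mulr0 subr0.
have -> : (a * d - b * c) * f2 = a * (c * f1 + d * f2) - c * (a * f1 + b * f2) by ring.
by rewrite H H' !mulr0 subr0.
Qed.

Lemma kprod_bound b w : kbound f1 f2 b -> kcycle f1 f2 w -> kprod b w = 0 /\ kprod w b = 0.
Proof.
case=> t ->; case: w => p q; rewrite /kcycle /kprod /= => H.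
split.
  have -> : - (t * f2) * q - t * f1 * p = - t * (p * f1 + q * f2) by ring.
  by rewrite H mulr0.
have -> : p * (t * f1) - q * - (t * f2) = t * (p * f1 + q * f2) by ring.
by rewrite H mulr0.
Qed.

Lemma basis_of_delta (z : 'I_2 -> R * R) : H1_generated f1 f2 z ->
  (forall x, x * kprod (z 0) (z 1) = 0 -> inI f1 f2 x) -> H1_basis f1 f2 z.
Proof.
move=> [Hc Hg] Hd; split => // c Hb i.
have Hb0 := kprod_bound Hb (Hc 1).
have Hb1 := kprod_bound Hb (Hc 0).
move: Hb0 Hb1 Hd; rewrite lincomb2.
case: (z 0) => a cc; case: (z 1) => b d; rewrite /kprod /= => [[H0 _] [_ H1]] Hd.
case: (I2cases i) => ->; apply: Hd.
  by rewrite -H0; ring.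
by rewrite -H1; ring.
Qed.


Lemma not_inI1 : nu (gen_ideal [:: f1; f2]) 2 -> ~ inI f1 f2 1.
Proof.
move=> [_ Hmin] H1.
have : (2 <= size [:: (1 : R)%R])%N; last by [].
apply: Hmin => x; split => _.
  by apply/gen1; exists x; rewrite mulr1.
by rewrite -[x]mulr1; case: inI_ideal => _ _ PM; apply: PM.
Qed.

Lemma f1_not t : nu (gen_ideal [:: f1; f2]) 2 -> f1 <> t * f2.
Proof.
move=> [_ Hmin] E.
have : (2 <= size [:: f2])%N; last by [].
apply: Hmin => x; split.
  by move/gen2 => [p [q ->]]; apply/gen1; exists (p * t + q); rewrite E; ring.
by move/gen1 => [c ->]; apply/gen2; exists 0, c; ring.
Qed.

Lemma f2_not t : nu (gen_ideal [:: f1; f2]) 2 -> f2 <> t * f1.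
Proof.
move=> [_ Hmin] E.
have : (2 <= size [:: f1])%N; last by [].
apply: Hmin => x; split.
  by move/gen2 => [p [q ->]]; apply/gen1; exists (p + q * t); rewrite E; ring.
by move/gen1 => [c ->]; apply/gen2; exists c, 0; ring.
Qed.

Lemma zerodiv : nu (gen_ideal [:: f1; f2]) 2 -> grade (gen_ideal [:: f1; f2]) 0 ->
  forall g, inI f1 f2 g -> exists2 x, x != 0 & g * x = 0.
Proof.
move=> Hnu [_ Hg] g Ig; apply: NNPP => H.
have : (size [:: g] <= 0)%N; last by [].
apply: Hg; last by move=> [|i] // _.
split.
  move=> [|i] //= _ y /gen_nil Hy; apply/gen_nil; apply: NNPP => Hy0; apply: H.
  by exists y => //; apply/eqP.
move/gen1 => [c Hc]; apply: (not_inI1 Hnu); rewrite Hc.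
by case: inI_ideal => _ _ PM; apply: PM.
Qed.

Lemma annI : noetherian R -> nu (gen_ideal [:: f1; f2]) 2 -> grade (gen_ideal [:: f1; f2]) 0 ->
  exists2 x, x != 0 & kcycle2 f1 f2 x.
Proof.
move=> noeth Hnu Hgr.
have [x Hx H] := ann_nonzero noeth inI_ideal (zerodiv Hnu Hgr).
by exists x => //; split; rewrite mulrC; apply: H; [exact: inI_f1| exact: inI_f2].
Qed.

Lemma qci_cond2 : noetherian R -> nu (gen_ideal [:: f1; f2]) 2 ->
  grade (gen_ideal [:: f1; f2]) 0 -> qci f1 f2 -> cond2 f1 f2.
Proof.
move=> noeth Hnu Hgr [r [w [Hb [Hsur Hinj] Hk]]].
have n1 := not_inI1 Hnu.
have r2 : r = 2%N.
  case: (ltngtP r 2) => // Hr.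
    exfalso; have [x Hx0 Hx] := annI noeth Hnu Hgr.
    have [c Hc] := Hsur x Hx.
    move/eqP: Hx0; apply; rewrite Hc big1 // => i _; rewrite big1 // => j Hij.
    by move: (ltn_ord j) Hij Hr; lia.
  exfalso; case: (Hk 3%N isT) => [H0|//].
  by have := bin_gt0 r 3; rewrite H0 Hr.
subst r.
case: Hb => [[Hc Hg] Hind].
split; first by exists w.
exists w; split => //.
- move=> i Hgi; case: (I2cases i) => Ei; rewrite Ei in Hgi.
    have [c [t Ht]] := (proj2 Hgi) (w 1) (Hc 1).
    pose cc := fun i : 'I_2 => if val i == 0%N then - c ord0 else 1.
    have Hb' : kbound f1 f2 (lincomb w cc).
      by exists t; rewrite -Ht lincomb2 /lincomb !big_ord1 /cc /=; congr pair; ring.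
    by have := Hind cc Hb' 1.
  have [c [t Ht]] := (proj2 Hgi) (w 0) (Hc 0).
  pose cc := fun i : 'I_2 => if val i == 0%N then 1 else - c ord0.
  have Hb' : kbound f1 f2 (lincomb w cc).
    by exists t; rewrite -Ht lincomb2 /lincomb !big_ord1 /cc /=; congr pair; ring.
  by have := Hind cc Hb' 0.
- have [H1 H2] := kprod_cyc (Hc 0) (Hc 1).
  split => x; split.
  + by move=> Hx; have [c ->] := Hsur x Hx; rewrite wsum2; exists (c 0 1); rewrite mulrC.
  + by move=> [t ->]; split; rewrite mulrAC ?H1 ?H2 mul0r.
  + move=> Hx; have := Hinj (fun _ _ => x); rewrite wsum2 => /(_ Hx 0 1).
    by apply.
  + move=> /gen2 [p [q ->]].
    have -> : (p * f1 + q * f2) * kprod (w 0) (w 1) =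
       p * (kprod (w 0) (w 1) * f1) + q * (kprod (w 0) (w 1) * f2) by ring.
    by rewrite H1 H2 !mulr0 addr0.
Qed.

Lemma cond2_qci : nu (gen_ideal [:: f1; f2]) 2 -> cond2 f1 f2 -> qci f1 f2.
Proof.
move=> Hnu [_ [z [Hg _ /= [Hd1 Hd2]]]].
exists 2%N, z; split.
- by apply: basis_of_delta => // x /Hd2.
- split.
  + by move=> x /Hd1 [t ->]; exists (fun _ _ => t); rewrite wsum2 mulrC.
  + move=> c; rewrite wsum2 => /Hd2 H i j Hij.
    by case: (I2cases i) (I2cases j) Hij => -> [] ->.
- by move=> k Hk; left; apply: bin_small.
Qed.

End F.
Section M.
Variable R : comNzRingType.
Variables (f1 f2 a b c d : R).
Local Open Scope ring_scope.

Lemma lin0 (x e k : R) : x = k * e -> e = 0 -> x = 0.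
Proof. by move=> -> ->; rewrite mulr0. Qed.

Ltac lin := solve [ ring | match goal with H : _ = 0 |- _ =>
   first [ apply: (lin0 (k:=1) _ H); ring | apply: (lin0 (k:=-1) _ H); ring ] end ].
Ltac mx := rewrite /mx_of_seq ?mxE ?big_ord_recl ?big_ord0 ?mxE /=.
Ltac mxin H := rewrite /mx_of_seq ?mxE ?big_ord_recl ?big_ord0 ?mxE /= in H.

Lemma ord2P (i : 'I_2) : i = ord0 \/ i = lift ord0 ord0.
Proof. by case: i => [[|[|i]] Hi] //; [left|right]; apply: val_inj. Qed.
Lemma ord3P (i : 'I_3) : [\/ i = ord0, i = lift ord0 ord0 | i = lift ord0 (lift ord0 ord0)].
Proof. by case: i => [[|[|[|i]]] Hi] //; [apply: Or31|apply: Or32|apply: Or33]; apply: val_inj. Qed.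
Lemma ord4P (i : 'I_4) : [\/ i = ord0, i = lift ord0 ord0, i = lift ord0 (lift ord0 ord0)
   | i = lift ord0 (lift ord0 (lift ord0 ord0))].
Proof.
by case: i => [[|[|[|[|i]]]] Hi] //; [apply: Or41|apply: Or42|apply: Or43|apply: Or44]; apply: val_inj.
Qed.

Local Notation D3 := (mx_of_seq 3 4 [:: [:: - c; - d; a; b]; [:: f1; 0; f2; 0]; [:: 0; f1; 0; f2]]).
Local Notation D2 := (mx_of_seq 2 3 [:: [:: - f2; a; b]; [:: f1; c; d]]).
Local Notation D1 := (mx_of_seq 1 2 [:: [:: f1; f2]]).
Local Notation D0 := (mx_of_seq 1 1 [:: [:: a * d - b * c]]).
Local Notation D1T := (mx_of_seq 2 1 [:: [:: f1]; [:: f2]]).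

Lemma E21_fwd : exact_at D2 D1 ->
  [/\ a * f1 + c * f2 = 0, b * f1 + d * f2 = 0 &
   forall p q, p * f1 + q * f2 = 0 -> exists t u v,
     p = - (t * f2) + u * a + v * b /\ q = t * f1 + u * c + v * d].
Proof.
move=> [H0 Hk]; split.
- have E := congr1 (fun M : 'M[R]_(1,3) => M ord0 (lift ord0 ord0)) H0; mxin E; lin.
- have E := congr1 (fun M : 'M[R]_(1,3) => M ord0 (lift ord0 (lift ord0 ord0))) H0; mxin E; lin.
- move=> p q Hpq.
  have [|y Hy] := Hk (mx_of_seq 2 1 [:: [:: p]; [:: q]]).
    by apply/matrixP => i j; rewrite (ord1 i) (ord1 j); mx; lin.
  have e0 := congr1 (fun M : 'cV[R]_2 => M ord0 ord0) Hy; mxin e0.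
  have e1 := congr1 (fun M : 'cV[R]_2 => M (lift ord0 ord0) ord0) Hy; mxin e1.
  exists (y ord0 ord0), (y (lift ord0 ord0) ord0), (y (lift ord0 (lift ord0 ord0)) ord0).
  by split; [rewrite e0|rewrite e1]; ring.
Qed.

Lemma E21_bwd : a * f1 + c * f2 = 0 -> b * f1 + d * f2 = 0 ->
   (forall p q, p * f1 + q * f2 = 0 -> exists t u v,
     p = - (t * f2) + u * a + v * b /\ q = t * f1 + u * c + v * d) ->
  exact_at D2 D1.
Proof.
move=> Hac Hbd Hk; split.
  by apply/matrixP => i j; rewrite (ord1 i); case: (ord3P j) => ->; mx; lin.
move=> x Hx; have e := congr1 (fun M : 'M[R]_(1,1) => M ord0 ord0) Hx; mxin e.
have [|t [u [v [Hp Hq]]]] := Hk (x ord0 ord0) (x (lift ord0 ord0) ord0); first lin.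
exists (mx_of_seq 3 1 [:: [:: t]; [:: u]; [:: v]]).
by apply/matrixP => i j; rewrite (ord1 j); case: (ord2P i) => ->; mx; [rewrite Hp|rewrite Hq]; ring.
Qed.

Lemma E10_fwd : exact_at D1 D0 ->
  [/\ (a * d - b * c) * f1 = 0, (a * d - b * c) * f2 = 0 &
   forall x, x * (a * d - b * c) = 0 -> exists p q, x = p * f1 + q * f2].
Proof.
move=> [H0 Hk]; split.
- have E := congr1 (fun M : 'M[R]_(1,2) => M ord0 ord0) H0; mxin E; lin.
- have E := congr1 (fun M : 'M[R]_(1,2) => M ord0 (lift ord0 ord0)) H0; mxin E; lin.
- move=> x Hx.
  have [|y Hy] := Hk (mx_of_seq 1 1 [:: [:: x]]).
    by apply/matrixP => i j; rewrite (ord1 i) (ord1 j); mx; lin.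
  have e0 := congr1 (fun M : 'cV[R]_1 => M ord0 ord0) Hy; mxin e0.
  exists (y ord0 ord0), (y (lift ord0 ord0) ord0).
  by rewrite e0; ring.
Qed.

Lemma E10_bwd : (a * d - b * c) * f1 = 0 -> (a * d - b * c) * f2 = 0 ->
   (forall x, x * (a * d - b * c) = 0 -> exists p q, x = p * f1 + q * f2) ->
  exact_at D1 D0.
Proof.
move=> H1 H2 Hk; split.
  by apply/matrixP => i j; rewrite (ord1 i); case: (ord2P j) => ->; mx; lin.
move=> x Hx; have e := congr1 (fun M : 'M[R]_(1,1) => M ord0 ord0) Hx; mxin e.
have [|p [q Hp]] := Hk (x ord0 ord0); first lin.
exists (mx_of_seq 2 1 [:: [:: p]; [:: q]]).
by apply/matrixP => i j; rewrite (ord1 j) (ord1 i); mx; rewrite Hp; ring.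
Qed.

Lemma E0T_fwd : exact_at D0 D1T ->
  forall x, x * f1 = 0 -> x * f2 = 0 -> exists t, x = (a * d - b * c) * t.
Proof.
move=> [H0 Hk] x H1 H2.
have [|y Hy] := Hk (mx_of_seq 1 1 [:: [:: x]]).
  by apply/matrixP => i j; rewrite (ord1 j); case: (ord2P i) => ->; mx; lin.
have e0 := congr1 (fun M : 'cV[R]_1 => M ord0 ord0) Hy; mxin e0.
by exists (y ord0 ord0); rewrite e0; ring.
Qed.

Lemma E0T_bwd : (a * d - b * c) * f1 = 0 -> (a * d - b * c) * f2 = 0 ->
  (forall x, x * f1 = 0 -> x * f2 = 0 -> exists t, x = (a * d - b * c) * t) ->
  exact_at D0 D1T.
Proof.
move=> H1 H2 Hk; split.
  by apply/matrixP => i j; rewrite (ord1 j); case: (ord2P i) => ->; mx; lin.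
move=> x Hx.
have e0 := congr1 (fun M : 'M[R]_(2,1) => M ord0 ord0) Hx; mxin e0.
have e1 := congr1 (fun M : 'M[R]_(2,1) => M (lift ord0 ord0) ord0) Hx; mxin e1.
have [||t Ht] := Hk (x ord0 ord0); [lin|lin|].
exists (mx_of_seq 1 1 [:: [:: t]]).
by apply/matrixP => i j; rewrite (ord1 j) (ord1 i); mx; rewrite Ht; ring.
Qed.

Lemma E32_bwd : a * f1 + c * f2 = 0 -> b * f1 + d * f2 = 0 ->
  (forall x0 x1 x2, - f2 * x0 + a * x1 + b * x2 = 0 -> f1 * x0 + c * x1 + d * x2 = 0 ->
     exists y0 y1 y2 y3, [/\ x0 = - c * y0 - d * y1 + a * y2 + b * y3,
        x1 = f1 * y0 + f2 * y2 & x2 = f1 * y1 + f2 * y3]) ->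
  exact_at D3 D2.
Proof.
move=> Hac Hbd Hk; split.
  by apply/matrixP => i j; case: (ord2P i) => ->; case: (ord4P j) => ->; mx; lin.
move=> x Hx.
have e0 := congr1 (fun M : 'M[R]_(2,1) => M ord0 ord0) Hx; mxin e0.
have e1 := congr1 (fun M : 'M[R]_(2,1) => M (lift ord0 ord0) ord0) Hx; mxin e1.
have [||y0 [y1 [y2 [y3 [H0 H1 H2]]]]] :=
  Hk (x ord0 ord0) (x (lift ord0 ord0) ord0) (x (lift ord0 (lift ord0 ord0)) ord0); [lin|lin|].
exists (mx_of_seq 4 1 [:: [:: y0]; [:: y1]; [:: y2]; [:: y3]]).
apply/matrixP => i j; rewrite (ord1 j); case: (ord3P i) => ->; mx;
  [rewrite H0|rewrite H1|rewrite H2]; ring.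
Qed.

End M.
Section Main.
Variable R : comNzRingType.
Variables (mm : R -> Prop) (f1 f2 : R).
Local Open Scope ring_scope.

Lemma unit_notmm : noetherian R -> maximal_ideal mm ->
  (forall P, maximal_ideal P -> forall x, P x <-> mm x) ->
  forall u, ~ mm u -> exists v, u * v = 1.
Proof.
move=> noeth [[[m0 mD mM] m1] mmax] Hu u Hnu.
pose Q x := exists m r, mm m /\ x = m + u * r.
have HQ : is_ideal Q.
  split; first by exists 0, 0; split => //; rewrite mulr0 addr0.
  - move=> x y [m [r [Hm ->]]] [m' [r' [Hm' ->]]]; exists (m + m'), (r + r').
    by split; [exact: mD | ring].
  - by move=> s x [m [r [Hm ->]]]; exists (s * m), (s * r); split; [exact: mM | ring].
have [m [r [Hm E]]] : Q 1.
  apply: NNPP => HQ1; apply: Hnu.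
  have sub : forall x, mm x -> Q x by move=> x Hx; exists x, 0; split => //; rewrite mulr0 addr0.
  have Hqu : Q u by exists 0, 1; split => //; rewrite mulr1 add0r.
  exact: (proj1 (mmax Q (conj HQ HQ1) sub u) Hqu).
have Hur : u * r = 1 - m by rewrite E; ring.
pose J0 x := exists s, x = (1 - m) * s.
case: (classic (J0 1)) => [[s Hs]|HJ1].
  by exists (r * s); rewrite mulrA Hur; symmetry.
have HJ : is_ideal J0.
  split; first by exists 0; rewrite mulr0.
  - by move=> x y [s ->] [s' ->]; exists (s + s'); ring.
  - by move=> t x [s ->]; exists (t * s); ring.
have [P [HP sP]] := exists_max noeth (conj HJ HJ1).
have : mm (1 - m) by apply/(Hu P HP); apply: sP; exists 1; rewrite mulr1.
move=> H1m; exfalso; apply: m1; have -> : (1 : R) = (1 - m) + m by ring.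
exact: mD.
Qed.

Lemma cyc_mm u v : noetherian R -> maximal_ideal mm ->
  (forall P, maximal_ideal P -> forall x, P x <-> mm x) ->
  nu (gen_ideal [:: f1; f2]) 2 -> u * f1 + v * f2 = 0 -> mm u /\ mm v.
Proof.
move=> noeth Hmm Hu Hnu Huv; split; apply: NNPP => H;
  have [w Hw] := unit_notmm noeth Hmm Hu H.
  apply: (f1_not (t := - (w * v)) Hnu).
  rewrite -[f1]mul1r -Hw.
  have -> : - (w * v) * f2 = u * w * f1 - w * (u * f1 + v * f2) by ring.
  by rewrite Huv mulr0 subr0.
apply: (f2_not (t := - (w * u)) Hnu).
rewrite -[f2]mul1r -Hw.
have -> : - (w * u) * f1 = v * w * f2 - w * (u * f1 + v * f2) by ring.
by rewrite Huv mulr0 subr0.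
Qed.

Lemma cond3_cond2 : nu (gen_ideal [:: f1; f2]) 2 -> cond3 f1 f2 mm -> cond2 f1 f2.
Proof.
move=> Hnu [a [b [cc [d [_ _ _ _ /= [_ E21 E10 E0T]]]]]].
have [Hac Hbd Hk1] := E21_fwd E21.
have [HD1 HD2 Hk0] := E10_fwd E10.
have HkT := E0T_fwd E0T.
pose z := fun i : 'I_2 => if val i == 0%N then (a, cc) else (b, d).
have Ez : kprod (z 0) (z 1) = a * d - b * cc by rewrite /kprod /z /=; ring.
have Hc : forall i, kcycle f1 f2 (z i).
  by move=> i; case: (I2cases i) => ->; rewrite /kcycle /z /=.
have Hg : H1_generated f1 f2 z.
  split => // [[p q]] /= Hpq; have [t [u [v [Hp Hq]]]] := Hk1 p q Hpq.
  exists (fun i : 'I_2 => if val i == 0%N then u else v); exists t.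
  by rewrite !big_ord_recl !big_ord0 /z /=; congr pair; rewrite ?Hp ?Hq; ring.
have Hd2 : forall x, x * kprod (z 0) (z 1) = 0 <-> inI f1 f2 x.
  move=> x; rewrite Ez; split => [/Hk0 [p [q ->]]|/gen2 [p [q ->]]].
    by apply/gen2; exists p, q.
  have -> : (p * f1 + q * f2) * (a * d - b * cc) =
    p * ((a * d - b * cc) * f1) + q * ((a * d - b * cc) * f2) by ring.
  by rewrite HD1 HD2; ring.
have Hd1 : forall x, kcycle2 f1 f2 x <-> exists t, x = kprod (z 0) (z 1) * t.
  move=> x; rewrite Ez; split => [[H1 H2]|[t ->]]; first exact: HkT.
  by split; rewrite mulrAC ?HD1 ?HD2 mul0r.
split; first by exists z; apply: basis_of_delta => // x /Hd2.
exists z; split => //.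
move=> i Hgi; apply: (not_inI1 Hnu); apply/Hd2; rewrite mul1r Ez.
case: (I2cases i) => Ei; rewrite Ei in Hgi.
  have [c [t Ht]] := (proj2 Hgi) (z 1) (Hc 1).
  case: Ht; rewrite /lincomb !big_ord1 /z /= => Hb' Hd'.
  have -> : a * d - b * cc = a * (d - c ord0 * cc) - cc * (b - c ord0 * a) by ring.
  rewrite Hb' Hd'.
  have -> : a * (t * f1) - cc * - (t * f2) = t * (a * f1 + cc * f2) by ring.
  by rewrite Hac mulr0.
have [c [t Ht]] := (proj2 Hgi) (z 0) (Hc 0).
case: Ht; rewrite /lincomb !big_ord1 /z /= => Ha' Hc'.
have -> : a * d - b * cc = d * (a - c ord0 * b) - b * (cc - c ord0 * d) by ring.
rewrite Ha' Hc'.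
have -> : d * - (t * f2) - b * (t * f1) = - t * (b * f1 + d * f2) by ring.
by rewrite Hbd mulr0.
Qed.

Lemma cond2_cond3 : noetherian R -> maximal_ideal mm ->
  (forall P, maximal_ideal P -> forall x, P x <-> mm x) ->
  nu (gen_ideal [:: f1; f2]) 2 -> cond2 f1 f2 -> cond3 f1 f2 mm.
Proof.
move=> noeth Hmm Hu Hnu [_ [z [Hg _ /= [Hd1 Hd2]]]].
have Hb := basis_of_delta Hg (fun x => proj1 (Hd2 x)).
case: Hb => [[Hc Hgen] Hind].
have Hac := Hc 0; have Hbd := Hc 1.
move: Hd1 Hd2 Hgen Hind Hac Hbd; rewrite /kcycle /kprod.
have Ez0 : z 0 = ((z 0).1, (z 0).2) by case: (z 0).
have Ez1 : z 1 = ((z 1).1, (z 1).2) by case: (z 1).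
move: Ez0 Ez1.
set a := (z 0).1; set cc := (z 0).2; set b := (z 1).1; set d := (z 1).2.
move=> Ez0 Ez1 Hd1 Hd2 Hgen Hind Hac Hbd.
have ED : a * d - cc * b = a * d - b * cc by ring.
rewrite ED in Hd1 Hd2.
have HD1 : (a * d - b * cc) * f1 = 0 by case: (proj2 (Hd1 _) (ex_intro _ 1 (esym (mulr1 _)))).
have HD2 : (a * d - b * cc) * f2 = 0 by case: (proj2 (Hd1 _) (ex_intro _ 1 (esym (mulr1 _)))).
have [ma mc] := cyc_mm noeth Hmm Hu Hnu Hac.
have [mb md] := cyc_mm noeth Hmm Hu Hnu Hbd.
exists a, b, cc, d; split => //=; split.
- apply: E32_bwd => // x0 x1 x2 E1 E2.
  pose cv := fun i : 'I_2 => if val i == 0%N then x1 else x2.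
  have Hbnd : kbound f1 f2 (lincomb z cv).
    exists (- x0); rewrite lincomb2 Ez0 Ez1 /cv /=.
    congr pair; apply/eqP; rewrite -subr_eq0; apply/eqP.
      by rewrite -E1; ring.
    by rewrite -E2; ring.
  have /gen2 [p [q Hx1]] := Hind cv Hbnd 0.
  have /gen2 [u [v Hx2]] := Hind cv Hbnd 1.
  rewrite /cv /= in Hx1 Hx2; subst x1 x2.
  pose e := x0 - (- cc * p - d * u + a * q + b * v).
  have He2 : e * f2 = 0.
    have -> : e * f2 = - (- f2 * x0 + a * (p * f1 + q * f2) + b * (u * f1 + v * f2))
       + p * (a * f1 + cc * f2) + u * (b * f1 + d * f2) by rewrite /e; ring.
    by rewrite E1 Hac Hbd; ring.
  have He1 : e * f1 = 0.
    have -> : e * f1 = (f1 * x0 + cc * (p * f1 + q * f2) + d * (u * f1 + v * f2))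
       - q * (a * f1 + cc * f2) - v * (b * f1 + d * f2) by rewrite /e; ring.
    by rewrite E2 Hac Hbd; ring.
  have [t Ht] := proj1 (Hd1 e) (conj He1 He2).
  exists (p + b * t), u, (q + d * t), v; split.
  + apply/eqP; rewrite -subr_eq0; apply/eqP.
    have -> : x0 - (- cc * (p + b * t) - d * u + a * (q + d * t) + b * v) =
      e - (a * d - b * cc) * t by rewrite /e; ring.
    by rewrite Ht subrr.
  + have -> : f1 * (p + b * t) + f2 * (q + d * t) = p * f1 + q * f2 + t * (b * f1 + d * f2) by ring.
    by rewrite Hbd mulr0 addr0.
  + ring.
- apply: E21_bwd => // p q Hpq.
  have [cv [t Ht]] := Hgen (p, q) Hpq.
  move: Ht; rewrite lincomb2 Ez0 Ez1 /= => [[Hp Hq]].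
  exists t, (cv 0), (cv 1); split.
    by rewrite -Hp; ring.
  by rewrite -Hq; ring.
- apply: E10_bwd => // x /Hd2 /gen2 [p [q ->]]; by exists p, q.
- apply: E0T_bwd => // x H1 H2; exact: (proj1 (Hd1 x) (conj H1 H2)).
Qed.

End Main.

Theorem lemma1p7 (R : comNzRingType) (mm : R -> Prop) (f1 f2 : R) :
  noetherian R ->
  maximal_ideal mm ->
  (forall P, maximal_ideal P -> forall x, P x <-> mm x) ->
  nu (gen_ideal [:: f1; f2]) 2 ->
  grade (gen_ideal [:: f1; f2]) 0 ->
  (qci f1 f2 <-> cond2 f1 f2) /\ (cond2 f1 f2 <-> cond3 f1 f2 mm).
Proof.
move=> noeth Hmm Hu Hnu Hgr; split; split.
- exact: qci_cond2.
- exact: cond2_qci.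
- exact: cond2_cond3.
- exact: cond3_cond2.
Qed.
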